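(* Let $\lambda\in(1,2)$. The map sending a sequence $(a_j)_{j=1}^\infty\in\{0,1\}^{\mathbb{N}}$ to the $S$-gap shift $X(S)$ with $S=\{j-1: a_j=1\}$ is a bijection between the set of sequences $(a_j)_{j=1}^\infty\in\{0,1\}^{\mathbb{N}}$ satisfying $\sum_{j=1}^\infty a_j\lambda^{-j}=1$ and the set of $S$-gap shifts with entropy $\log\lambda$.
   Context: For a nonempty set $S\subseteq\{0,1,2,\dots\}$, the $S$-gap shift $X(S)\subseteq\{0,1\}^{\mathbb{Z}}$ is the set of bi-infinite binary sequences in which the number of consecutive zeros between ones is always an element of $S$ (points have the form $\cdots10^{n_{-1}}10^{n_0}10^{n_1}\cdots$ with $n_j\in S$). The entropy of a shift $X$ is $h(X)=\lim_n\frac1n\log|\mathcal{B}_n(X)|$, where $\mathcal{B}_n(X)$ is the set of words of length $n$ occurring in points of $X$ and $\log$ is to base $2$. *)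

(* Defs.v *)
From HB Require Import structures.
From mathcomp Require Import all_boot all_order all_algebra.
From mathcomp Require Import all_classical all_reals all_analysis.
Set Implicit Arguments. Unset Strict Implicit. Unset Printing Implicit Defensive.
Import Order.TTheory GRing.Theory Num.Theory.
Import numFieldNormedType.Exports.
Local Open Scope classical_set_scope.
Local Open Scope ring_scope.

Definition bipoint := int -> bool.

(* The S-gap shift X(S): points of the form ... 1 0^{n_{-1}} 1 0^{n_0} 1 0^{n_1} ...
   with every n_j in S.  p enumerates (in increasing order) the positions of
   the symbol 1, and consecutive ones are separated by n zeros with n in S. *)
Definition gap_shift (S : set nat) : set bipoint :=
  [set x | exists p : int -> int,
      (forall j : int, exists2 n : nat, S n & p (j + 1) = p j + n%:Z + 1)
      /\ (forall i : int, x i = true <-> exists j : int, p j = i)].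

Definition occurs (X : set bipoint) (n : nat) (w : n.-tuple bool) : Prop :=
  exists2 x, X x & exists i : int, forall k : 'I_n, tnth w k = x (i + (k : nat)%:Z).

Definition words (X : set bipoint) (n : nat) : {set n.-tuple bool} :=
  [set w : n.-tuple bool | `[< occurs X w >]].

Definition log2 {R : realType} (x : R) : R := ln x / ln 2.

Definition has_entropy {R : realType} (X : set bipoint) (h : R) : Prop :=
  (fun n : nat => log2 (#|words X n|%:R : R) / n%:R) @ \oo --> h.

(* Main.v *)
Require Import Defs.
From HB Require Import structures.
From mathcomp Require Import all_boot all_order all_algebra.
From mathcomp Require Import all_classical all_reals all_analysis.
From mathcomp Require Import zify ring lra.
Set Implicit Arguments. Unset Strict Implicit. Unset Printing Implicit Defensive.
Import Order.TTheory GRing.Theory Num.Theory.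
Import numFieldNormedType.Exports.
Local Open Scope classical_set_scope.
Local Open Scope ring_scope.

Fixpoint allseqs (n : nat) : seq (seq bool) :=
  if n is n'.+1 then map (cons false) (allseqs n') ++ map (cons true) (allseqs n')
  else [:: [::]].

Lemma mem_allseqs n w : (w \in allseqs n) = (size w == n).
Proof.
elim: n w => [|n IH] [|c w] //=.
  by rewrite mem_cat; apply/negbTE; rewrite negb_or; apply/andP; split;
     apply/mapP => -[u _].
rewrite mem_cat eqSS -IH; case: c.
  rewrite (mem_map (fun _ _ => _)); last by move=> ? ? [].
  by apply/orP/idP => [[/mapP[u _ //]|//]|]; right.
rewrite (mem_map (fun _ _ => _)); last by move=> ? ? [].
by apply/orP/idP => [[//|/mapP[u _ //]]|]; left.
Qed.

Lemma uniq_allseqs n : uniq (allseqs n).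
Proof.
elim: n => [|n IH] //=; rewrite cat_uniq !map_inj_uniq //; last 2 first.
  by move=> ? ? [].
  by move=> ? ? [].
rewrite IH andbT; apply/hasPn => w /mapP[u _ ->]; apply/mapP => -[v _ //].
Qed.

Lemma count_allseqsS (P : pred (seq bool)) n :
  count P (allseqs n.+1) =
  (count (fun w => P (false :: w)) (allseqs n) + count (fun w => P (true :: w)) (allseqs n))%N.
Proof. by rewrite /= count_cat !count_map. Qed.

Lemma card_tuple_count (P : pred (seq bool)) n :
  #|[set w : n.-tuple bool | P w]%SET| = count P (allseqs n).
Proof.
transitivity (count (fun w : n.-tuple bool => P w) (enum {: n.-tuple bool})).
  rewrite cardE /enum_mem size_filter count_filter; apply: eq_count => w.
  by rewrite /= finset.inE andbT.
transitivity (count P (map val (enum {: n.-tuple bool}))).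
  by rewrite [RHS]count_map.
suff /permP -> : perm_eq (map val (enum {: n.-tuple bool})) (allseqs n) by [].
apply: uniq_perm; first by rewrite map_inj_uniq ?enum_uniq //; exact: val_inj.
  exact: uniq_allseqs.
move=> w; rewrite mem_allseqs; apply/mapP/idP => [[t _ ->]|/eqP Hw].
  by rewrite size_tuple.
by exists (Tuple (introT eqP Hw)); rewrite ?mem_enum.
Qed.

Fixpoint okgap (b : nat -> bool) (j : nat) (w : seq bool) : bool :=
  match w with
  | [::] => true
  | false :: w' => okgap b j.+1 w'
  | true :: w' => b j && okgap b 0 w'
  end.

Fixpoint okpre (b : nat -> bool) (w : seq bool) : bool :=
  match w with
  | [::] => true
  | false :: w' => okpre b w'
  | true :: w' => okgap b 0 w'
  end.

Definition G b j n := count (okgap b j) (allseqs n).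

Lemma GS b j n : G b j n.+1 = (G b j.+1 n + b j * G b 0 n)%N.
Proof.
rewrite /G count_allseqsS /=; congr addn.
by case: (b j) => /=; rewrite ?mul1n ?mul0n // count_pred0.
Qed.

Lemma Gunroll b n j : G b j n = (1 + \sum_(i < n | b (j + i)%N) G b 0 (n.-1 - i))%N.
Proof.
elim: n j => [|n IH] j; first by rewrite big_ord0.
rewrite GS IH [in RHS]big_mkcond big_ord_recl /= addn0 subn0 [in LHS]big_mkcond /=.
have -> : (\sum_(i < n) (if b (j.+1 + i)%N then G b 0 (n.-1 - i) else 0%N) =
          \sum_(i < n) (if b (j + bump 0 i)%N then G b 0 (n - bump 0 i) else 0%N))%N.
  apply: eq_bigr => i _; rewrite /bump /= add1n addSn addnS; congr (if _ then G b 0 _ else _); lia.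
case: (b j); rewrite ?mul1n ?mul0n ?addn0 ?add0n //; by rewrite -addnA (addnC (\sum_(_ < _) _)).
Qed.

Lemma G0unroll b n : G b 0 n = (1 + \sum_(i < n | b i) G b 0 (n.-1 - i))%N.
Proof. by rewrite Gunroll; congr addn; apply: eq_bigl => i; rewrite add0n. Qed.

Lemma Hunroll b n : count (okpre b) (allseqs n) = (1 + \sum_(m < n) G b 0 m)%N.
Proof.
elim: n => [|n IH]; first by rewrite big_ord0.
by rewrite count_allseqsS /= IH big_ord_recr /= addnA.
Qed.

Definition Fs {R : realType} (b : nat -> bool) (x : R) (N : nat) : R :=
  \sum_(k < N) (b k)%:R * x ^- k.+1.

Lemma sum_filterR {R : realType} (b : nat -> bool) (f : nat -> R) n :
  \sum_(i < n | b i) f i = \sum_(i < n) (b i)%:R * f i.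
Proof.
by rewrite big_mkcond; apply: eq_bigr => i _; case: (b i); rewrite ?mul1r ?mul0r.
Qed.

Lemma Fs_ge0 {R : realType} b (x : R) N : 0 < x -> 0 <= Fs b x N.
Proof.
move=> x0; apply: sumr_ge0 => i _; apply: mulr_ge0 => //.
by rewrite invr_ge0 exprn_ge0 // ltW.
Qed.

Lemma expr_split {R : realType} (x : R) n i : (i < n)%N -> x != 0 ->
  x ^+ (n.-1 - i).+1 = x ^+ n.+1 * x ^- i.+1.
Proof.
move=> lt x0.
have -> : n.+1 = ((n.-1 - i).+1 + i.+1)%N by lia.
rewrite exprD mulrK // unitfE expf_neq0 //.
Qed.

Lemma Gbound {R : realType} b (x q : R) : 1 < x -> q < 1 ->
  (forall N, Fs b x N <= q) -> forall n, (G b 0 n)%:R <= (1 - q)^-1 * x ^+ n.+1.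
Proof.
move=> x1 q1 HF n; elim/ltn_ind: n => n IH.
have x0 : 0 < x by apply: lt_trans x1.
have q0 : 0 <= q by apply: le_trans (HF 0%N); rewrite /Fs big_ord0.
have K0 : 0 < (1 - q)^-1 by rewrite invr_gt0 subr_gt0.
rewrite G0unroll natrD natr_sum (sum_filterR b (fun i => (G b 0 (n.-1 - i))%:R)).
apply: (@le_trans _ _ (1 + \sum_(i < n) (b i)%:R * ((1 - q)^-1 * x ^+ (n.-1 - i).+1))).
  rewrite lerD2l; apply: ler_sum => i _; apply: ler_wpM2l; first by case: (b i).
  apply: IH; have := ltn_ord i; lia.
have -> : \sum_(i < n) (b i)%:R * ((1 - q)^-1 * x ^+ (n.-1 - i).+1) =
          (1 - q)^-1 * x ^+ n.+1 * Fs b x n.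
  rewrite /Fs mulr_sumr; apply: eq_bigr => i _.
  rewrite (@expr_split _ x n i (ltn_ord i)) ?gt_eqF //; field.
  by rewrite expf_neq0 ?gt_eqF //= subr_gt0.
have xn : 1 <= x ^+ n.+1 by rewrite exprn_ege1 // ltW.
have : (1 - q)^-1 * x ^+ n.+1 * Fs b x n <= (1 - q)^-1 * x ^+ n.+1 * q.
  apply: ler_wpM2l; last exact: HF. apply: mulr_ge0; [exact: ltW | lra].
have E : (1 - q)^-1 * x ^+ n.+1 * q = (1 - q)^-1 * x ^+ n.+1 - x ^+ n.+1.
  by field; rewrite subr_eq0 gt_eqF.
lra.
Qed.

Lemma geom_sum {R : realType} (x : R) n :
  (x - 1) * \sum_(m < n) x ^+ m.+1 = x ^+ n.+1 - x.
Proof.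
elim: n => [|n IH]; first by rewrite big_ord0 mulr0 expr1 subrr.
by rewrite big_ord_recr /= mulrDr IH !exprS; ring.
Qed.

Lemma Hbound {R : realType} b (x q : R) : 1 < x -> q < 1 ->
  (forall N, Fs b x N <= q) ->
  exists C : R, 1 <= C /\ forall n, (count (okpre b) (allseqs n))%:R <= C * x ^+ n.
Proof.
move=> x1 q1 HF.
have q0 : 0 <= q by apply: le_trans (HF 0%N); rewrite /Fs big_ord0.
set K := (1 - q)^-1.
have K0 : 0 < K by rewrite invr_gt0 subr_gt0.
have x0 : 0 < x - 1 by rewrite subr_gt0.
exists (1 + K * x / (x - 1)); split.
  rewrite lerDl; apply: divr_ge0; last exact: ltW.
  by apply: mulr_ge0; [exact: ltW | lra].
move=> n; rewrite Hunroll natrD natr_sum.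
have S1 : \sum_(m < n) (G b 0 m)%:R <= K * \sum_(m < n) x ^+ m.+1.
  rewrite mulr_sumr; apply: ler_sum => m _; exact: Gbound.
have S2 : \sum_(m < n) x ^+ m.+1 = (x ^+ n.+1 - x) / (x - 1).
  by rewrite -geom_sum; field; rewrite gt_eqF.
have xn : 1 <= x ^+ n by rewrite exprn_ege1 // ltW.
rewrite S2 in S1.
have : K * ((x ^+ n.+1 - x) / (x - 1)) <= K * x / (x - 1) * x ^+ n.
  have c0 : 0 <= K / (x - 1) by apply: divr_ge0; exact: ltW.
  have -> : K * ((x ^+ n.+1 - x) / (x - 1)) = K / (x - 1) * (x ^+ n.+1 - x).
    by field; rewrite gt_eqF.
  have -> : K * x / (x - 1) * x ^+ n = K / (x - 1) * x ^+ n.+1.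
    by rewrite exprS; field; rewrite gt_eqF.
  apply: ler_wpM2l => //; lra.
have : 0 <= K * x / (x - 1).
  by apply: divr_ge0; [apply: mulr_ge0; [exact: ltW|lra] | exact: ltW].
move: (x ^+ n) xn => X xn; nra.
Qed.


Definition Pgap (b : nat -> bool) (p : int -> int) :=
  forall j : int, exists2 n : nat, [set k | b k] n & p (j + 1) = p j + n%:Z + 1.

Lemma p_step (b : nat -> bool) p : Pgap b p -> forall j, p j < p (j + 1).
Proof. move=> H j; case: (H j) => n _ ->; lia. Qed.

Lemma p_mono (b : nat -> bool) p : Pgap b p -> forall i j, i < j -> p i < p j.
Proof.
move=> H.
have A : forall (k : nat) i, p i < p (i + k.+1%:Z).
  elim=> [|k IH] i; first exact: (p_step H).
  apply: lt_trans (IH i) _.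
  have -> : i + k.+2%:Z = (i + k.+1%:Z) + 1 by lia.
  exact: (p_step H).
move=> i j lt; case E: (j - i - 1) => [k|k]; last by lia.
have -> : j = i + k.+1%:Z by lia.
exact: A.
Qed.

Lemma p_le (b : nat -> bool) p : Pgap b p -> forall i j, i <= j -> p i <= p j.
Proof.
move=> H i j; rewrite le_eqVlt => /orP[/eqP -> //|lt].
exact/ltW/(p_mono H).
Qed.

Lemma p_lt_inv (b : nat -> bool) p : Pgap b p -> forall i j, p i < p j -> i < j.
Proof.
move=> H i j lt; rewrite ltNge; apply/negP => le.
by move: (p_le H le); rewrite leNgt lt.
Qed.

Definition Pts (p : int -> int) (x : bipoint) := forall i, x i = true <-> exists j, p j = i.

Lemma gap_consec (b : nat -> bool) p x : Pgap b p -> Pts p x -> forall (u : int) (j : nat),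
  x u = true -> x (u + j.+1%:Z) = true ->
  (forall t : nat, (0 < t <= j)%N -> x (u + t%:Z) = false) -> b j.
Proof.
move=> Hp Hx u j /Hx[t0 E0] /Hx[t1 E1] Hz.
case: (Hp t0) => n /= bn En.
have nj : (n <= j)%N.
  rewrite leqNgt; apply/negP => jn.
  have lt1 : p t1 < p (t0 + 1) by rewrite E1 En E0; lia.
  have lt2 : p t0 < p t1 by rewrite E1 E0; lia.
  have := p_lt_inv Hp lt1; have := p_lt_inv Hp lt2; lia.
case: (ltngtP n j) => [nj'|//|<- //]; last by lia.
have : x (u + n.+1%:Z) = true by apply/Hx; exists (t0 + 1); rewrite En E0; lia.
by rewrite Hz //; lia.
Qed.

Definition mkw (x : bipoint) (i : int) (m : nat) : seq bool :=
  [seq x (i + k%:Z) | k <- iota 0 m].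

Lemma mkwS x i m : mkw x i m.+1 = x i :: mkw x (i + 1) m.
Proof.
rewrite /mkw /= addr0; congr cons.
have -> : iota 1 m = map (addn 1) (iota 0 m) by rewrite -iotaDl.
rewrite -map_comp; apply: eq_map => k /=; congr x; lia.
Qed.

Lemma okgap_point (b : nat -> bool) p x : Pgap b p -> Pts p x -> forall (m : nat) (u : int) (j : nat),
  x u = true -> (forall t : nat, (0 < t <= j)%N -> x (u + t%:Z) = false) ->
  okgap b j (mkw x (u + j.+1%:Z) m).
Proof.
move=> Hp Hx; elim=> [|m IH] u j xu Hz //.
rewrite mkwS /=; case E: (x (u + j.+1%:Z)).
  rewrite (gap_consec Hp Hx xu E Hz) /=.
  have -> : u + j.+1%:Z + 1 = (u + j.+1%:Z) + 0%N.+1%:Z by lia.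
  by apply: IH => // t; lia.
have -> : u + j.+1%:Z + 1 = u + j.+2%:Z by lia.
apply: IH => // t /andP[t0 tj]; case: (ltngtP t j.+1) => [tj'|tj'|->] //.
  by apply: Hz; lia.
exfalso; lia.
Qed.

Lemma okpre_point (b : nat -> bool) p x : Pgap b p -> Pts p x -> forall (m : nat) (i : int),
  okpre b (mkw x i m).
Proof.
move=> Hp Hx; elim=> [|m IH] i //.
rewrite mkwS /=; case E: (x i); last exact: IH.
have -> : i + 1 = i + 0%N.+1%:Z by lia.
by apply: (okgap_point Hp Hx m E) => t; lia.
Qed.

Lemma words_okpre (b : nat -> bool) n (w : n.-tuple bool) :
  w \in words (gap_shift [set k | b k]) n -> okpre b w.
Proof.
rewrite /words finset.inE => /asboolP [x [p [Hp Hx]] [i Hw]].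
have -> : val w = mkw x i n.
  rewrite -[val w](map_tnth_enum w) /mkw -val_enum_ord -map_comp.
  by apply: eq_map => k /=; rewrite Hw.
exact: (okpre_point Hp Hx).
Qed.

Lemma card_words_le (b : nat -> bool) n :
  (#|words (gap_shift [set k | b k]) n| <= count (okpre b) (allseqs n))%N.
Proof.
rewrite -card_tuple_count; apply: subset_leq_card; apply/fintype.subsetP => w Hw.
by rewrite finset.inE; exact: words_okpre.
Qed.

Definition inT (b : nat -> bool) (w : seq bool) : Prop :=
  exists p, Pgap b p /\ (exists j, p j = 0) /\
    forall k : nat, (k < size w)%N -> nth false w k = `[< exists j, p j = k%:Z >].

Lemma inT_words (b : nat -> bool) n (w : n.-tuple bool) :
  inT b w -> w \in words (gap_shift [set k | b k]) n.
Proof.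
move=> [p [Hp [_ Hw]]]; rewrite finset.inE; apply/asboolP.
exists (fun i => `[< exists j, p j = i >]).
  exists p; split => // i; split; first by move/asboolP.
  by move=> H; apply/asboolP.
exists 0 => k; rewrite (tnth_nth false) Hw ?size_tuple //.
Qed.

Lemma card_words_ge (b : nat -> bool) n :
  (count (fun w => `[< inT b w >]) (allseqs n) <= #|words (gap_shift [set k | b k]) n|)%N.
Proof.
rewrite -card_tuple_count; apply: subset_leq_card; apply/fintype.subsetP => w.
by rewrite finset.inE => /asboolP Hw; exact: inT_words.
Qed.

Lemma nth_nseq_cat (j k : nat) (s : seq bool) :
  nth false (nseq j false ++ s) k = if (k < j)%N then false else nth false s (k - j).
Proof. by rewrite nth_cat size_nseq nth_nseq; case: (k < j)%N. Qed.

Lemma inT_base (b : nat -> bool) m j : b m -> (j <= m)%N -> inT b (true :: nseq j false).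
Proof.
move=> bm jm; exists (fun t => t * m.+1%:Z); split.
  by move=> t; exists m => //; rewrite mulrDl mul1r; lia.
split; first by exists 0; rewrite mul0r.
move=> [|k] /=; rewrite size_nseq => lt.
  by symmetry; apply/asboolP; exists 0; rewrite mul0r.
rewrite nth_nseq if_same; symmetry; apply/asboolF => -[t] E.
have [t0|t0] : t <= 0 \/ 1 <= t by lia.
  have : t * m.+1%:Z <= 0 by nia.
  lia.
have : m.+1%:Z <= t * m.+1%:Z by nia.
lia.
Qed.

Lemma inT_cons (b : nat -> bool) j w :
  b j -> inT b (true :: w) -> inT b (true :: nseq j false ++ true :: w).
Proof.
move=> bj [p [Hp [[t0 E0] Hw]]].
have neg : forall t, t < t0 -> p t < 0.
  by move=> t lt; rewrite -E0; exact: (p_mono Hp).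
have pos : forall t, t0 <= t -> 0 <= p t.
  by move=> t le; rewrite -E0; exact: (p_le Hp).
pose p' t := if t < t0 then (t - t0 + 1) * j.+1%:Z else p t + j.+1%:Z.
have neg' : forall t, t < t0 -> p' t <= 0.
  by move=> t lt; rewrite /p' lt; nia.
have pos' : forall t, t0 <= t -> p' t = p t + j.+1%:Z.
  by move=> t le; rewrite /p' ltNge le.
exists p'; split.
  move=> t; have [h|[h|h]] : t + 1 < t0 \/ t + 1 = t0 \/ t0 <= t by lia.
  - exists j => //; rewrite /p' h (_ : t < t0); last by lia.
    nia.
  - exists j => //; rewrite pos' ?h // /p' (_ : t < t0); last by lia.
    rewrite E0; nia.
  - case: (Hp t) => n bn En; exists n => //.
    rewrite !pos' ?En //; lia.
split; first by exists (t0 - 1); rewrite /p' (_ : t0 - 1 < t0); [nia | lia].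
move=> [|k] /=; rewrite ?size_cat ?size_nseq => lt.
  by symmetry; apply/asboolP; exists (t0 - 1); rewrite /p' (_ : t0 - 1 < t0); [nia | lia].
rewrite nth_nseq_cat; case: ifP => kj.
  symmetry; apply/asboolF => -[t E].
  have [h|h] : t < t0 \/ t0 <= t by lia.
    by have := neg' t h; lia.
  by have := pos t h; rewrite pos' // in E; lia.
have kj' : (j <= k)%N by rewrite leqNgt kj.
rewrite Hw; last by rewrite /= in lt *; lia.
apply: asbool_equiv_eq; split => -[t E].
  have h : t0 <= t.
    rewrite leNgt; apply/negP => h; have := neg t h; lia.
  by exists t; rewrite pos' //; lia.
have [h|h] : t < t0 \/ t0 <= t by lia.
  by have := neg' t h; lia.
by exists t; rewrite pos' // in E; lia.
Qed.


Definition Kc (b : nat -> bool) j n :=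
  count (fun w => `[< inT b (true :: nseq j false ++ w) >]) (allseqs n).

Lemma nseq_shift j (w : seq bool) : nseq j false ++ false :: w = nseq j.+1 false ++ w.
Proof. by elim: j => //= j ->. Qed.

Lemma KS (b : nat -> bool) j n : (Kc b j.+1 n + b j * Kc b 0 n <= Kc b j n.+1)%N.
Proof.
rewrite /Kc count_allseqsS; apply: leq_add.
  by rewrite leq_eqVlt; apply/orP; left; apply/eqP; apply: eq_count => w; rewrite nseq_shift.
case bj: (b j); rewrite ?mul1n ?mul0n //.
apply: sub_count => w /asboolP H; apply/asboolP; exact: inT_cons.
Qed.

Lemma Kc_base (b : nat -> bool) m j : b m -> ((j <= m)%N <= Kc b j 0)%N.
Proof.
move=> bm; rewrite /Kc /= cats0 addn0; case jm: (j <= m)%N => //.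
have -> : `[< inT b (true :: nseq j false) >] = true.
  by apply/asboolP; exact: (inT_base bm jm).
by [].
Qed.

Lemma Kunroll (b : nat -> bool) m n j : b m ->
  ((j + n <= m)%N + \sum_(i < n | b (j + i)%N) Kc b 0 (n.-1 - i) <= Kc b j n)%N.
Proof.
move=> bm; elim: n j => [|n IH] j; first by rewrite big_ord0 addn0 addn0; exact: Kc_base.
apply: leq_trans (KS b j n).
have IHj := IH j.+1; rewrite big_mkcond /= in IHj.
rewrite big_mkcond big_ord_recl /= subn0 addn0.
have -> : (\sum_(i < n) (if b (j + bump 0 i)%N then Kc b 0 (n - bump 0 i) else 0%N) =
          \sum_(i < n) (if b (j.+1 + i)%N then Kc b 0 (n.-1 - i) else 0%N))%N.
  apply: eq_bigr => i _; rewrite /bump /= add1n addSn addnS; congr (if _ then Kc b 0 _ else _); lia.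
move: IHj; rewrite addSn -addnS.
case: (b j); rewrite ?mul1n ?mul0n ?addn0 ?add0n // => H.
by rewrite addnCA [X in (_ <= X)%N]addnC leq_add2l.
Qed.

Lemma Fs_mono {R : realType} (b : nat -> bool) (y : R) N N' : 0 < y -> (N <= N')%N ->
  Fs b y N <= Fs b y N'.
Proof.
move=> y0 le; rewrite /Fs -(subnKC le) big_split_ord /= lerDl.
apply: sumr_ge0 => i _; apply: mulr_ge0 => //.
by rewrite invr_ge0 exprn_ge0 // ltW.
Qed.

Lemma expr_split2 {R : realType} (x : R) n i : (i < n)%N -> x != 0 ->
  x ^+ (n.-1 - i) = x ^+ n * x ^- i.+1.
Proof.
move=> lt x0.
have -> : n = ((n.-1 - i) + i.+1)%N by lia.
rewrite exprD mulrK // ?unitfE ?expf_neq0 //; congr (_ ^+ _); lia.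
Qed.

Lemma Kbound {R : realType} (b : nat -> bool) (y : R) m : 1 < y -> b m ->
  1 <= Fs b y m.+1 -> forall n, y ^+ n / y ^+ m <= (Kc b 0 n)%:R.
Proof.
move=> y1 bm HF n; elim/ltn_ind: n => n IH.
have y0 : 0 < y by apply: lt_trans y1.
have yn : forall k, 0 < y ^+ k by move=> k; rewrite exprn_gt0.
have := @Kunroll b m n 0 bm; rewrite add0n.
case: (leqP n m) => nm /=.
  move=> H; have K1 : 1 <= (Kc b 0 n)%:R :> R.
    by rewrite ler1n; apply: leq_trans H; rewrite leq_addr.
  apply: le_trans K1; rewrite ler_pdivrMr // mul1r.
  by rewrite ler_eXn2l.
rewrite add0n => H.
have H' : (\sum_(i < n | b i) Kc b 0 (n.-1 - i) <= Kc b 0 n)%N.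
  by apply: leq_trans H; apply: leq_sum => i _ //.
apply: le_trans (_ : (\sum_(i < n | b i) Kc b 0 (n.-1 - i))%:R <= _); last by rewrite ler_nat.
rewrite natr_sum (sum_filterR b (fun i => (Kc b 0 (n.-1 - i))%:R)).
apply: (@le_trans _ _ (\sum_(i < n) (b i)%:R * (y ^+ (n.-1 - i) / y ^+ m))); last first.
  apply: ler_sum => i _; apply: ler_wpM2l; first by case: (b i).
  apply: IH; have := ltn_ord i; lia.
have -> : \sum_(i < n) (b i)%:R * (y ^+ (n.-1 - i) / y ^+ m) = y ^+ n / y ^+ m * Fs b y n.
  rewrite /Fs mulr_sumr; apply: eq_bigr => i _.
  rewrite (@expr_split2 _ y n i (ltn_ord i)) ?gt_eqF //; field.
  by rewrite !expf_neq0 ?gt_eqF.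
rewrite -[X in X <= _]mulr1; apply: ler_wpM2l.
  by apply: divr_ge0; apply: ltW.
by apply: le_trans HF _; apply: Fs_mono.
Qed.

Lemma exists_m {R : realType} (b : nat -> bool) (y : R) N : 0 < y -> 1 <= Fs b y N ->
  exists m, b m /\ 1 <= Fs b y m.+1.
Proof.
move=> y0; elim: N => [|N IH]; first by rewrite /Fs big_ord0 ler10.
case bN: (b N); first by move=> H; exists N.
by rewrite /Fs big_ord_recr /= bN mul0r addr0; exact: IH.
Qed.

Notation cw b n := (#|words (gap_shift [set k | b k]) n|).

Lemma lower_words {R : realType} (b : nat -> bool) (y : R) : 1 < y ->
  (exists N, 1 <= Fs b y N) ->
  exists beta : R, 0 < beta /\ forall n, beta * y ^+ n.+1 <= (cw b n.+1)%:R.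
Proof.
move=> y1 [N HN].
have y0 : 0 < y by apply: lt_trans y1.
have [m [bm Hm]] := exists_m y0 HN.
exists (y ^+ m.+1)^-1; split; first by rewrite invr_gt0 exprn_gt0.
move=> n; apply: (@le_trans _ _ (y ^+ n / y ^+ m)).
  rewrite le_eqVlt; apply/orP; left; apply/eqP; rewrite !exprS; field.
  by rewrite ?expf_neq0 ?gt_eqF.
apply: le_trans (Kbound y1 bm Hm n) _; rewrite ler_nat.
apply: leq_trans (card_words_ge b n.+1).
by rewrite count_allseqsS leq_addl.
Qed.

Lemma upper_words {R : realType} (b : nat -> bool) (x q : R) : 1 < x -> q < 1 ->
  (forall N, Fs b x N <= q) ->
  exists C : R, 1 <= C /\ forall n, (cw b n)%:R <= C * x ^+ n.
Proof.
move=> x1 q1 HF; have [C [C1 HC]] := Hbound x1 q1 HF.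
exists C; split => // n; apply: le_trans (HC n); rewrite ler_nat.
exact: card_words_le.
Qed.


Lemma ev (P : nat -> Prop) : (\forall n \near \oo, P n) <-> exists N, forall n, (N <= n)%N -> P n.
Proof. split; first by move=> [N _ H]; exists N; exact: H. by move=> [N H]; exists N. Qed.

Lemma archi_nat {R : realType} (a : R) : exists N : nat, forall n : nat, (N <= n)%N -> a < n%:R.
Proof.
exists (Num.Def.archi_bound a) => n le.
apply: le_lt_trans (ler_norm a) _; apply: lt_le_trans (unstable.ltr_norm_bound a) _.
by rewrite ler_nat.
Qed.

Lemma ln_upper {R : realType} (c C z : R) n : 0 < c -> 0 < C -> 0 < z ->
  c <= C * z ^+ n -> ln c <= ln C + n%:R * ln z.
Proof.
move=> c0 C0 z0 H.
rewrite mulr_natl -lnXn // -lnM ?posrE ?exprn_gt0 //.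
by rewrite ler_ln ?posrE ?mulr_gt0 ?exprn_gt0.
Qed.

Lemma ln_lower {R : realType} (c C z : R) n : 0 < c -> 0 < C -> 0 < z ->
  C * z ^+ n <= c -> ln C + n%:R * ln z <= ln c.
Proof.
move=> c0 C0 z0 H.
rewrite mulr_natl -lnXn // -lnM ?posrE ?exprn_gt0 //.
by rewrite ler_ln ?posrE ?mulr_gt0 ?exprn_gt0.
Qed.

Lemma ln_expR_mul {R : realType} (a t : R) : 0 < a -> ln (a * expR t) = ln a + t.
Proof. by move=> a0; rewrite lnM ?posrE ?expR_gt0 // expRK. Qed.

Lemma entropy_of_bounds {R : realType} (c : nat -> R) (lam : R) : 1 < lam ->
  (forall z, lam < z -> exists C, 1 <= C /\ forall n, c n <= C * z ^+ n) ->
  (forall y, 1 < y -> y < lam ->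
     exists beta, 0 < beta /\ forall n, beta * y ^+ n.+1 <= c n.+1) ->
  (fun n => log2 (c n) / n%:R) @ \oo --> log2 lam.
Proof.
move=> lam1 Hup Hlo.
have L0 : 0 < ln (2 : R) by apply: ln_gt0; lra.
have l0 : 0 < ln lam by apply: ln_gt0.
have lam0 : 0 < lam by lra.
apply/cvgrPdist_lt => e e0.
pose e' := e * ln (2 : R).
have e'0 : 0 < e' by apply: mulr_gt0.
pose t := Num.min (e' / 2) (ln lam / 2).
have te : t <= e' / 2 by rewrite ge_min lexx.
have tl : t <= ln lam / 2 by rewrite ge_min lexx orbT.
have t0 : 0 < t by rewrite lt_min; apply/andP; split; apply: divr_gt0.
pose z := lam * expR t; pose y := lam * expR (- t).
have lz : ln z = ln lam + t by apply: ln_expR_mul.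
have ly : ln y = ln lam - t by rewrite /y ln_expR_mul.
have z1 : lam < z.
  by rewrite /z -[X in X < _]mulr1 ltr_pM2l // expR_gt1.
have ylam : y < lam.
  by rewrite /y -[X in _ < X]mulr1 ltr_pM2l // expR_lt1 oppr_lt0.
have y1 : 1 < y.
  rewrite ltNge; apply/negP => /ln_le0; lra.
have y0 : 0 < y by lra.
have z0 : 0 < z by lra.
have [C [C1 HC]] := Hup z z1.
have [be [be0 Hbe]] := Hlo y y1 ylam.
have C0 : 0 < C by lra.
have [N HN] := archi_nat (2 * (`|ln C| + `|ln be|) / e').
apply/ev; exists N.+1 => -[//|n] Nn.
pose r : R := n.+1%:R.
have r0 : 0 < r by rewrite ltr0n.
have hr : 2 * (`|ln C| + `|ln be|) < r * e'.
  by rewrite -ltr_pdivrMr //; apply: HN; apply: ltnW.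
have cpos : 0 < c n.+1.
  by apply: lt_le_trans (Hbe n); apply: mulr_gt0 => //; rewrite exprn_gt0.
have Hu := ln_upper cpos C0 z0 (HC n.+1).
have Hl := ln_lower cpos be0 y0 (Hbe n).
rewrite -/r lz in Hu; rewrite -/r ly in Hl.
have rt : r * t <= r * (e' / 2) by rewrite ler_pM2l.
have a1 := ler_norm (ln C); have a2 : - ln be <= `|ln be| by rewrite -normrN ler_norm.
have a3 := normr_ge0 (ln C); have a4 := normr_ge0 (ln be).
rewrite /log2 -/r mulrAC.
have -> : ln lam / ln 2 - ln (c n.+1) / r / ln 2 = (ln lam - ln (c n.+1) / r) / ln 2.
  by rewrite mulrBl.
rewrite normrM [`|(ln 2)^-1|]ger0_norm ?invr_ge0 ?ltW // ltr_pdivrMr // -/e'.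
rewrite ltr_distlC ltr_pdivlMr // ltr_pdivrMr //.
move: (ln (c n.+1)) Hu Hl => A Hu Hl.
apply/andP; split; nra.
Qed.


Lemma pow_ratio {R : realType} (y z : R) k : 0 < y -> 0 < z ->
  z ^- k = (y / z) ^+ k * y ^- k.
Proof.
move=> y0 z0; rewrite exprMn exprVn; field.
by rewrite !expf_neq0 ?gt_eqF.
Qed.

Lemma Fscale {R : realType} (b : nat -> bool) (y z : R) N : 0 < y -> y <= z ->
  Fs b z N <= (y / z) * Fs b y N.
Proof.
move=> y0 yz; have z0 : 0 < z by apply: lt_le_trans yz.
have r0 : 0 <= y / z by apply: divr_ge0; apply: ltW.
have r1 : y / z <= 1 by rewrite ler_pdivrMr // mul1r.
rewrite /Fs mulr_sumr; apply: ler_sum => k _; rewrite mulrCA.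
apply: ler_wpM2l; first by case: (b k).
rewrite (pow_ratio k.+1 y0 z0); apply: ler_wpM2r.
  by rewrite invr_ge0 exprn_ge0 // ltW.
by rewrite -[X in _ <= X]expr1; apply: ler_wiXn2l.
Qed.

Lemma Fscale2 {R : realType} (b : nat -> bool) (y z : R) N : 0 < y -> y <= z ->
  (y / z) ^+ N * Fs b y N <= Fs b z N.
Proof.
move=> y0 yz; have z0 : 0 < z by apply: lt_le_trans yz.
have r0 : 0 <= y / z by apply: divr_ge0; apply: ltW.
have r1 : y / z <= 1 by rewrite ler_pdivrMr // mul1r.
rewrite /Fs mulr_sumr; apply: ler_sum => k _; rewrite mulrCA.
apply: ler_wpM2l; first by case: (b k).
rewrite (pow_ratio k.+1 y0 z0); apply: ler_wpM2r.
  by rewrite invr_ge0 exprn_ge0 // ltW.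
by apply: ler_wiXn2l => //; exact: ltn_ord.
Qed.

Lemma tailsum {R : realType} (r : R) K N : 0 <= r -> r < 1 ->
  \sum_(k < N) ((K <= k)%N)%:R * r ^+ k.+1 <= r ^+ K.+1 / (1 - r).
Proof.
move=> r0 r1.
have E : forall N, (\sum_(k < N) ((K <= k)%N)%:R * r ^+ k.+1) * (1 - r) + r ^+ (maxn N K).+1
                   = r ^+ K.+1.
  elim=> [|M IH]; first by rewrite big_ord0 mul0r add0r max0n.
  rewrite big_ord_recr /=; case: (leqP K M) => KM.
    have -> : maxn M.+1 K = M.+1 by apply/maxn_idPl; apply: leqW.
    move: IH; rewrite (maxn_idPl KM) => <-; rewrite mul1r !exprS; ring.
  have -> : maxn M.+1 K = maxn M K.
    by rewrite (maxn_idPr KM) (maxn_idPr (ltnW KM)).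
  by rewrite (_ : false%:R = 0 :> R) // mul0r addr0.
rewrite ler_pdivlMr ?subr_gt0 //; rewrite -(E N) lerDl exprn_ge0 //.
Qed.

Lemma Fs_tail {R : realType} (b : nat -> bool) (x0 x lam : R) K N :
  0 < x0 -> x0 <= x -> x <= lam ->
  Fs b x N <= (lam / x) ^+ K * Fs b lam N + \sum_(k < N) ((K <= k)%N)%:R * (x0^-1) ^+ k.+1.
Proof.
move=> p0 px xl; have xp : 0 < x by apply: lt_le_trans px.
have lp : 0 < lam by apply: lt_le_trans xl.
have q1 : 1 <= lam / x by rewrite ler_pdivlMr // mul1r.
rewrite /Fs mulr_sumr -big_split /=; apply: ler_sum => k _.
have bk0 : 0 <= (b k)%:R :> R by case: (b k).
have bk1 : (b k)%:R <= 1 :> R by case: (b k).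
have hx : 0 <= x ^- k.+1 by rewrite invr_ge0 exprn_ge0 // ltW.
have hl : 0 <= lam ^- k.+1 by rewrite invr_ge0 exprn_ge0 // ltW.
have hK : 0 <= (lam / x) ^+ K by rewrite exprn_ge0 // (le_trans ler01).
case: (leqP K k) => Kk.
  rewrite mul1r exprVn.
  have : x ^- k.+1 <= x0 ^- k.+1.
    rewrite lef_pV2 ?posrE ?exprn_gt0 //; apply: lerXn2r => //; rewrite ?nnegrE ltW //.
  have : 0 <= (lam / x) ^+ K * ((b k)%:R * lam ^- k.+1).
    by apply: mulr_ge0 => //; apply: mulr_ge0.
  have : (b k)%:R * x ^- k.+1 <= x ^- k.+1 by rewrite ler_piMl.
  lra.
rewrite (_ : false%:R = 0 :> R) // mul0r addr0 mulrCA; apply: ler_wpM2l => //.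
rewrite (pow_ratio k.+1 lp xp); apply: ler_wpM2r => //.
exact: ler_weXn2l.
Qed.

Lemma bernoulli {R : realType} (e : R) N : 0 <= e <= 1 -> 1 - N%:R * e <= (1 - e) ^+ N.
Proof.
move=> /andP[e0 e1]; elim: N => [|N IH]; first by rewrite mul0r subr0 expr0.
rewrite exprSr; have h : 0 <= 1 - e by lra.
have := ler_wpM2r h IH; have N0 : 0 <= N%:R :> R by rewrite ler0n.
rewrite -natr1; move: (N%:R) N0 => n n0 H; nra.
Qed.


Lemma not_cvg_upper {R : realType} (c : nat -> R) (lam x C : R) :
  1 < x -> x < lam -> 1 <= C -> (forall n, 0 <= c n) ->
  (forall n, c n <= C * x ^+ n) ->
  ~ ((fun n => log2 (c n) / n%:R) @ \oo --> log2 lam).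
Proof.
move=> x1 xl C1 c0 Hc /cvgrPdist_lt H.
have L0 : 0 < ln (2 : R) by apply: ln_gt0; lra.
have lx : 0 < ln x by apply: ln_gt0.
have lxl : ln x < ln lam by rewrite ltr_ln ?posrE; lra.
have lC : 0 <= ln C by apply: ln_ge0.
pose d := ln lam - ln x.
have d0 : 0 < d by rewrite subr_gt0.
have e0 : 0 < d / (2 * ln 2) by apply: divr_gt0 => //; apply: mulr_gt0 => //; lra.
have /ev [N1 HN1] := H _ e0.
have [N2 HN2] := archi_nat (2 * ln C / d).
pose n := (maxn N1 N2).+1.
have Hd := HN1 n (leq_trans (leq_maxl _ _) (leqnSn _)).
have hn := HN2 n (leq_trans (leq_maxr _ _) (leqnSn _)).
pose r : R := n%:R; rewrite -/r in hn.
have r0 : 0 < r by rewrite ltr0n.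
have hr : 2 * ln C < r * d by rewrite -ltr_pdivrMr.
have Hu : ln (c n) <= ln C + r * ln x.
  have [cz|cp] := eqVneq (c n) 0.
    by rewrite cz ln0 //; apply: addr_ge0 => //; apply: mulr_ge0 => //; exact: ltW.
  have cp' : 0 < c n by rewrite lt0r cp c0.
  by apply: ln_upper => //; lra.
rewrite /= /log2 -/r in Hd.
move: (ln (c n)) Hu Hd => A Hu Hd.
have : ln lam / ln 2 - A / ln 2 / r < d / (2 * ln 2).
  by apply: le_lt_trans Hd; apply: ler_norm.
have -> : ln lam / ln 2 - A / ln 2 / r = (r * ln lam - A) / (r * ln 2).
  by field; rewrite !gt_eqF.
have -> : d / (2 * ln 2) = (r * d / 2) / (r * ln 2) by field; rewrite !gt_eqF.
rewrite ltr_pM2r ?invr_gt0 ?mulr_gt0 //.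
have hd : r * d = r * ln lam - r * ln x by rewrite /d mulrBr.
lra.
Qed.

Lemma not_cvg_lower {R : realType} (c : nat -> R) (lam y be : R) :
  1 < lam -> lam < y -> 0 < be ->
  (forall n, be * y ^+ n.+1 <= c n.+1) ->
  ~ ((fun n => log2 (c n) / n%:R) @ \oo --> log2 lam).
Proof.
move=> l1 ly b0 Hc /cvgrPdist_lt H.
have L0 : 0 < ln (2 : R) by apply: ln_gt0; lra.
have y0 : 0 < y by lra.
have lxl : ln lam < ln y by rewrite ltr_ln ?posrE; lra.
pose d := ln y - ln lam.
have d0 : 0 < d by rewrite subr_gt0.
have e0 : 0 < d / (2 * ln 2) by apply: divr_gt0 => //; apply: mulr_gt0 => //; lra.
have /ev [N1 HN1] := H _ e0.
have [N2 HN2] := archi_nat (- 2 * ln be / d).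
pose n := (maxn N1 N2).+1.
have Hd := HN1 n (leq_trans (leq_maxl _ _) (leqnSn _)).
have hn := HN2 n (leq_trans (leq_maxr _ _) (leqnSn _)).
pose r : R := n%:R; rewrite -/r in hn.
have r0 : 0 < r by rewrite ltr0n.
have hr : - 2 * ln be < r * d by rewrite -ltr_pdivrMr.
have cp : 0 < c n by apply: lt_le_trans (Hc _); apply: mulr_gt0 => //; rewrite exprn_gt0.
have Hl : ln be + r * ln y <= ln (c n) by apply: ln_lower => //; exact: Hc.
rewrite /= /log2 -/r in Hd.
move: (ln (c n)) Hl Hd => A Hl Hd.
have : A / ln 2 / r - ln lam / ln 2 < d / (2 * ln 2).
  by apply: le_lt_trans Hd; rewrite distrC; apply: ler_norm.
have -> : A / ln 2 / r - ln lam / ln 2 = (A - r * ln lam) / (r * ln 2).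
  by field; rewrite !gt_eqF.
have -> : d / (2 * ln 2) = (r * d / 2) / (r * ln 2) by field; rewrite !gt_eqF.
rewrite ltr_pM2r ?invr_gt0 ?mulr_gt0 //.
have hd : r * d = r * ln y - r * ln lam by rewrite /d mulrBr.
lra.
Qed.


Lemma gap_inj (a1 a2 : nat -> bool) :
  gap_shift [set k | a1 k] = gap_shift [set k | a2 k] -> forall s, a1 s -> a2 s.
Proof.
move=> E s as1.
pose p := fun t : int => t * s.+1%:Z.
pose x : bipoint := fun i => `[< exists t, p t = i >].
have Hp : Pgap a1 p by move=> t; exists s => //; rewrite /p mulrDl mul1r; lia.
have Hx : Pts p x by move=> i; split; [move/asboolP | move=> h; apply/asboolP].
have : gap_shift [set k | a1 k] x by exists p.
rewrite E => -[p2 [Hp2 Hx2]].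
apply: (gap_consec Hp2 Hx2 (u := 0)).
- by apply/asboolP; exists 0; rewrite /p mul0r.
- by apply/asboolP; exists 1; rewrite /p mul1r add0r.
- move=> t /andP [t0 ts]; apply/asboolF => -[u]; rewrite /p add0r => h.
  have [u0|u0] : u <= 0 \/ 1 <= u by lia.
    have : u * s.+1%:Z <= 0 by nia.
    lia.
  have : s.+1%:Z <= u * s.+1%:Z by nia.
  lia.
Qed.

Lemma cvg_le_limit {R : realType} (b : nat -> bool) (lam : R) :
  0 < lam -> (fun N => Fs b lam N) @ \oo --> (1 : R) -> forall N, Fs b lam N <= 1.
Proof.
move=> l0 /cvgrPdist_lt H N; rewrite leNgt; apply/negP => FN.
have d0 : 0 < Fs b lam N - 1 by rewrite subr_gt0.
have /ev [N1 HN1] := H (Fs b lam N - 1) d0.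
have := HN1 (maxn N N1) (leq_maxr _ _).
have := Fs_mono b l0 (leq_maxl N N1).
move: (Fs b lam (maxn N N1)) => F hF.
rewrite ltr_norml; lra.
Qed.

Lemma cvg_near {R : realType} (b : nat -> bool) (lam : R) :
  (fun N => Fs b lam N) @ \oo --> (1 : R) -> forall d, 0 < d -> exists N, 1 - d <= Fs b lam N.
Proof.
move=> /cvgrPdist_lt H d d0; have /ev [N1 HN1] := H d d0.
exists N1; have := HN1 N1 (leqnn _); rewrite ltr_norml; lra.
Qed.

Lemma dir1_entropy {R : realType} (a : nat -> bool) (lam : R) : 1 < lam ->
  (fun N => Fs a lam N) @ \oo --> (1 : R) ->
  has_entropy (gap_shift [set k | a k]) (log2 lam).
Proof.
move=> l1 Hc; have l0 : 0 < lam by lra.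
have Hle := cvg_le_limit l0 Hc.
apply: (@entropy_of_bounds R (fun n => (cw a n)%:R)) => //.
  move=> z lz.
  have z0 : 0 < z by lra.
  have z1 : 1 < z by lra.
  have q1 : lam / z < 1 by rewrite ltr_pdivrMr // mul1r.
  have HF : forall N, Fs a z N <= lam / z.
    move=> N; apply: le_trans (Fscale a N l0 (ltW lz)) _.
    rewrite -[X in _ <= X]mulr1; apply: ler_wpM2l => //.
    by apply: divr_ge0; apply: ltW.
  have [C [C1 HC]] := upper_words z1 q1 HF.
  by exists C.
move=> y y1 yl.
have y0 : 0 < y by lra.
have d0 : 0 < 1 - y / lam by rewrite subr_gt0 ltr_pdivrMr // mul1r.
have [N HN] := cvg_near Hc d0.
apply: lower_words => //; exists N.
have := Fscale a N y0 (ltW yl).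
have r0 : 0 < y / lam by apply: divr_gt0.
move: (Fs a lam N) (Fs a y N) HN => F G HF HG.
rewrite opprB addrCA subrr addr0 in HF.
have : y / lam * 1 <= y / lam * G by lra.
by rewrite ler_pM2l.
Qed.


Lemma dir2_le1 {R : realType} (b : nat -> bool) (lam : R) : 1 < lam ->
  has_entropy (gap_shift [set k | b k]) (log2 lam) -> forall N, Fs b lam N <= 1.
Proof.
move=> l1 Hent N; rewrite leNgt; apply/negP => FN.
have l0 : 0 < lam by lra.
move: FN; set F := Fs b lam N => FN.
have F0 : 0 < F by lra.
have Fi : F * F^-1 = 1 by rewrite mulfV // gt_eqF.
have Fi0 : 0 < F^-1 by rewrite invr_gt0.
have Fi1 : F^-1 < 1 by rewrite invf_lt1.
pose n : R := N%:R.
have n0 : 0 <= n by rewrite ler0n.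
pose eta := (1 - F^-1) / (n + 1).
have e1 : eta * (n + 1) = 1 - F^-1 by rewrite /eta mulfVK // gt_eqF //; lra.
have e0 : 0 < eta by apply: divr_gt0; lra.
have eta1 : eta < 1 by nra.
pose y := lam / (1 - eta).
have ly : lam / y = 1 - eta by rewrite /y invf_div mulrC mulfVK // gt_eqF //; lra.
have lyl : lam < y by rewrite /y ltr_pdivlMr; [nra | lra].
have y1 : 1 < y by lra.
have HN : 1 <= Fs b y N.
  have := Fscale2 b N l0 (ltW lyl); rewrite ly -/F.
  have := @bernoulli R eta N ltac:(apply/andP; split; lra); rewrite -/n.
  move: ((1 - eta) ^+ N) => P hP H.
  apply: le_trans H; nra.
have [be [be0 Hbe]] := lower_words y1 (ex_intro _ N HN).
exact: (not_cvg_lower l1 lyl be0 Hbe Hent).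
Qed.

Lemma dir2_near {R : realType} (b : nat -> bool) (lam : R) : 1 < lam ->
  has_entropy (gap_shift [set k | b k]) (log2 lam) ->
  forall eps, 0 < eps -> eps <= 1 -> exists N, 1 - eps < Fs b lam N.
Proof.
move=> l1 Hent eps ep0 ep1.
case: (pselect (exists N, 1 - eps < Fs b lam N)) => // nH.
have HF : forall N, Fs b lam N <= 1 - eps.
  by move=> N; rewrite leNgt; apply/negP => h; apply: nH; exists N.
exfalso.
have l0 : 0 < lam by lra.
pose x0 := (1 + lam) / 2.
have x01 : 1 < x0 by rewrite /x0; lra.
have x0l : x0 < lam by rewrite /x0; lra.
pose r := x0^-1.
have r0 : 0 < r by rewrite invr_gt0; lra.
have r1 : r < 1 by rewrite invf_lt1 //; lra.
have [K HK] : exists K, r ^+ K.+1 / (1 - r) <= eps / 4.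
  have := @cvg_expr R r; rewrite ger0_norm ?ltW // => /(_ r1) /cvgrPdist_lt.
  have d0 : 0 < eps / 4 * (1 - r) by apply: mulr_gt0; lra.
  move=> /(_ _ d0) /ev [K HK]; exists K.
  have h := HK K.+1 (leqnSn _).
  have rK : 0 <= r ^+ K.+1 by apply: exprn_ge0; apply: ltW.
  rewrite sub0r normrN ger0_norm // in h.
  rewrite ler_pdivrMr ?subr_gt0 //; exact: ltW.
pose k : R := K.+1%:R.
have k0 : 0 < k by rewrite ltr0n.
pose eta := Num.min (eps / (4 * k)) ((lam - 1) / (2 * lam)).
have et1 : eta <= eps / (4 * k) by rewrite ge_min lexx.
have et2 : eta <= (lam - 1) / (2 * lam) by rewrite ge_min lexx orbT.
have et0 : 0 < eta.
  rewrite lt_min; apply/andP; split; apply: divr_gt0; lra.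
have et1' : k * eta <= eps / 4.
  by move: et1; rewrite ler_pdivlMr; [lra | nra].
have et2' : lam * eta <= (lam - 1) / 2.
  by move: et2; rewrite ler_pdivlMr; [lra | nra].
have etl1 : eta < 1 by nra.
have Kk : K%:R * eta <= eps / 4.
  apply: le_trans et1'; rewrite ler_pM2r // ler_nat; exact: leqnSn.
pose x := lam * (1 - eta).
have x0x : x0 <= x by rewrite /x /x0; nra.
have xl : x < lam by rewrite /x; nra.
have x1 : 1 < x by lra.
have xp : 0 < x by lra.
pose P := (lam / x) ^+ K.
have P1 : 1 <= P by apply: exprn_ege1; rewrite ler_pdivlMr // mul1r ltW.
have P2 : P * (1 - eta) ^+ K = 1.
  rewrite /P -exprMn /x; have -> : lam / (lam * (1 - eta)) * (1 - eta) = 1.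
    by field; rewrite !gt_eqF //; lra.
  by rewrite expr1n.
have eta01 : 0 <= eta <= 1 by apply/andP; split; nra.
have Bn := bernoulli K eta01.
pose q := P * (1 - eps) + eps / 4.
have q1 : q < 1.
  move: ((1 - eta) ^+ K) P2 Bn => Q P2 Bn; rewrite /q; nra.
have HFx : forall N, Fs b x N <= q.
  move=> N; apply: le_trans (Fs_tail b K N _ x0x (ltW xl)) _; first lra.
  rewrite -/P; apply: lerD.
    by apply: ler_wpM2l; [lra | exact: HF].
  by apply: le_trans HK; apply: tailsum; [exact: ltW | exact: r1].
have [C [C1 HC]] := upper_words x1 q1 HFx.
apply: (not_cvg_upper x1 xl C1 _ HC Hent).
by move=> n; rewrite ler0n.
Qed.


Lemma dir2 {R : realType} (b : nat -> bool) (lam : R) : 1 < lam ->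
  has_entropy (gap_shift [set k | b k]) (log2 lam) ->
  (fun N => Fs b lam N) @ \oo --> (1 : R).
Proof.
move=> l1 Hent; apply/cvgrPdist_lt => e e0.
have l0 : 0 < lam by lra.
pose e' := Num.min e 1.
have e'1 : e' <= 1 by rewrite ge_min lexx orbT.
have e'e : e' <= e by rewrite ge_min lexx.
have e'0 : 0 < e' by rewrite lt_min e0 ltr01.
have [N0 HN0] := dir2_near l1 Hent e'0 e'1.
apply/ev; exists N0 => N le.
have h1 := Fs_mono b l0 le; have h2 := dir2_le1 l1 Hent N.
rewrite ger0_norm; [lra | lra].
Qed.

Unset Implicit Arguments.
Theorem proposition4p1 (R : realType) (lambda : R) :
  1 < lambda < 2 ->
  set_bij
    [set a : nat -> bool |
       (fun N : nat => \sum_(k < N) ((a k)%:R * lambda ^- k.+1)) @ \oo --> (1 : R)]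
    [set X : set bipoint | exists S : set nat,
       S !=set0 /\ X = gap_shift S /\ has_entropy X (log2 lambda)]
    (fun a : nat -> bool => gap_shift [set k | a k]).
Proof.
move=> /andP [l1 l2]; split.
- move=> a /= Ha0.
  have Ha : (fun N => Fs a lambda N) @ \oo --> (1 : R) := Ha0.
  exists [set k | a k]; split; last first.
    by split => //; exact: (dir1_entropy l1 Ha).
  have d0 : (0 : R) < 1 / 2 by lra.
  have [N HN] := cvg_near Ha d0.
  case: (boolP (has a (iota 0 N))) => [/hasP [k _ ak] | /hasPn Hn].
    by exists k.
  exfalso; move: HN; rewrite /Fs big1; first lra.
  move=> i _; rewrite (negbTE (Hn i _)) ?mul0r // mem_iota add0n ltn_ord.
  by [].
- move=> a1 a2 _ _ E; apply/funext => s.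
  by apply/idP/idP; [exact: gap_inj | apply: gap_inj; rewrite E].
- move=> X [S [[s Ss] [-> Hent]]].
  have ES : [set k | `[< S k >]] = S.
    by apply/seteqP; split => k /=; [move/asboolP | move=> h; apply/asboolP].
  exists (fun k => `[< S k >]); last by rewrite /= ES.
  have Hb : has_entropy (gap_shift [set k | `[< S k >]]) (log2 lambda) by rewrite ES.
  exact: (dir2 l1 Hb).
Qed.
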